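(* There is an absolute constant $C$ such that the following holds. Let $d\ge 1$, $\sigma\in(0,1]$, $\theta\in(0,\pi/2)$, and let $L$ be a finite set of closed line segments in $\mathbb{R}^d$ such that (i) $L$ is $\sigma$-exposed, (ii) $\bigcap_{s\in L} s\neq\emptyset$, (iii) for every pair $s,s'\in L$ the angle between $s$ and $s'$ is at most $\theta$, and (iv) $\sin\theta\le \sigma/4$. Then $|L|\le C/\sigma^2$.
   Context: For sets $X, Y\subseteq\mathbb{R}^d$ and $\sigma>0$, $X$ $\sigma$-shadows $Y$ if $\max_{q\in Y} \mathrm{dist}(q, X) \le \sigma\cdot \mathrm{diam}(Y)$, where $\mathrm{dist}(q,X)=\min_{p\in X}\|q-p\|$. A set of objects is $\sigma$-exposed if no object in the set $\sigma$-shadows another (distinct) object of the set. The angle between two segments is the angle in $[0,\pi/2]$ between the lines supporting them. *)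

(* Defs.v *)
From Stdlib Require Export Reals List.
Open Scope R_scope.

(* A point of R^d is represented as a function nat -> R whose coordinates
   of index >= d vanish. *)
Definition point := nat -> R.

Definition in_Rd (d : nat) (x : point) : Prop := forall i, (d <= i)%nat -> x i = 0.

Definition vsub (x y : point) : point := fun i => x i - y i.

Definition dot (d : nat) (x y : point) : R := sum_f 0 (pred d) (fun i => x i * y i).

(* Euclidean norm in R^d (d >= 1 assumed where used) *)
Definition norm (d : nat) (x : point) : R := sqrt (dot d x x).

Record segment := Seg { ep1 : point; ep2 : point }.

Definition seg_set (s : segment) (q : point) : Prop :=
  exists t, 0 <= t <= 1 /\ forall i, q i = ep1 s i + t * (ep2 s i - ep1 s i).

Definition seg_diam (d : nat) (s : segment) : R := norm d (vsub (ep1 s) (ep2 s)).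

(* X sigma-shadows Y : max_{q in Y} dist(q, X) <= sigma * diam(Y);
   both segments are compact so max/min are attained. *)
Definition shadows (d : nat) (sigma : R) (X Y : segment) : Prop :=
  forall q, seg_set Y q -> exists p, seg_set X p /\ norm d (vsub q p) <= sigma * seg_diam d Y.

Definition same_seg (s s' : segment) : Prop := forall q, seg_set s q <-> seg_set s' q.

Definition exposed (d : nat) (sigma : R) (L : list segment) : Prop :=
  forall s s', In s L -> In s' L -> ~ same_seg s s' -> ~ shadows d sigma s s'.

(* Angle in [0, pi/2] between the lines supporting two (nondegenerate) segments. *)
Definition seg_angle (d : nat) (s s' : segment) : R :=
  let u := vsub (ep2 s) (ep1 s) in
  let v := vsub (ep2 s') (ep1 s') in
  acos (Rabs (dot d u v) / (norm d u * norm d v)).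

(* L is a finite set of closed line segments in R^d: endpoints in R^d,
   nondegenerate segments, listed without repetition (as sets). *)
Definition seg_family (d : nat) (L : list segment) : Prop :=
  (forall s, In s L -> in_Rd d (ep1 s) /\ in_Rd d (ep2 s) /\ ep1 s <> ep2 s) /\
  (forall i j, (i < length L)%nat -> (j < length L)%nat -> i <> j ->
     ~ same_seg (nth i L (Seg (fun _ => 0) (fun _ => 0))) (nth j L (Seg (fun _ => 0) (fun _ => 0)))).

(* Main.v *)
Require Import Defs.
From Stdlib Require Import Reals.
From Stdlib Require Import Lra Lia Psatz List FunctionalExtensionality ZArith Classical.
Open Scope R_scope.

Lemma sumR_lin : forall n (f g h : nat -> R) a b,
  (forall i, f i = a * g i + b * h i) ->
  sum_f_R0 f n = a * sum_f_R0 g n + b * sum_f_R0 h n.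
Proof.
  induction n; intros f g h a b H; simpl.
  - apply H.
  - rewrite (IHn f g h a b H), H. ring.
Qed.

Lemma dot_lin : forall d (x y z : point) a b,
  dot d (fun i => a * x i + b * y i) z = a * dot d x z + b * dot d y z.
Proof.
  intros. unfold dot, sum_f. apply sumR_lin. intros; simpl. ring.
Qed.

Lemma dot_sym : forall d x y, dot d x y = dot d y x.
Proof.
  intros. unfold dot. f_equal. apply functional_extensionality. intros; ring.
Qed.

Lemma dot_lin_r : forall d (x y z : point) a b,
  dot d z (fun i => a * x i + b * y i) = a * dot d z x + b * dot d z y.
Proof.
  intros. rewrite dot_sym, dot_lin, (dot_sym d x), (dot_sym d y). reflexivity.
Qed.

Lemma dot_ext : forall d x x' y y', (forall i, x i = x' i) -> (forall i, y i = y' i) ->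
  dot d x y = dot d x' y'.
Proof.
  intros. replace x with x' by (symmetry; apply functional_extensionality; auto).
  replace y with y' by (symmetry; apply functional_extensionality; auto). reflexivity.
Qed.

Lemma dot_quad : forall d x y a b,
  dot d (fun i => a * x i + b * y i) (fun i => a * x i + b * y i)
  = a^2 * dot d x x + 2 * a * b * dot d x y + b^2 * dot d y y.
Proof.
  intros. rewrite dot_lin, !dot_lin_r, (dot_sym d y x). ring.
Qed.

Lemma sum_sq_nonneg : forall n (x : nat -> R), 0 <= sum_f_R0 (fun i => x i * x i) n.
Proof.
  induction n; intros; simpl.
  - nra.
  - specialize (IHn x). nra.
Qed.

Lemma dot_nonneg : forall d x, 0 <= dot d x x.
Proof.
  intros. unfold dot, sum_f. apply (sum_sq_nonneg _ (fun i => x (i + 0)%nat)).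
Qed.

Lemma sum_sq_zero : forall n (x : nat -> R), sum_f_R0 (fun i => x i * x i) n <= 0 ->
  forall i, (i <= n)%nat -> x i = 0.
Proof.
  induction n; intros x H i Hi; simpl in H.
  - assert (i = 0)%nat by lia. subst. nra.
  - pose proof (sum_sq_nonneg n x).
    destruct (Nat.eq_dec i (S n)).
    + subst. nra.
    + apply IHn; [nra | lia].
Qed.

Lemma dot_pos : forall d x, (1 <= d)%nat -> in_Rd d x -> (exists i, x i <> 0) -> 0 < dot d x x.
Proof.
  intros d x Hd Hx [i Hi].
  destruct (Rle_lt_dec (dot d x x) 0) as [H|H]; auto.
  exfalso. unfold dot, sum_f in H.
  pose proof (sum_sq_zero _ (fun j => x (j + 0)%nat) H) as Z.
  destruct (Nat.lt_ge_cases i d).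
  - apply Hi. specialize (Z i). simpl in Z. rewrite Nat.add_0_r in Z. apply Z. lia.
  - apply Hi, Hx; auto.
Qed.

Lemma CS : forall d x y, 0 < dot d y y -> (dot d x y)^2 <= dot d x x * dot d y y.
Proof.
  intros d x y Hy.
  pose proof (dot_nonneg d (fun i => dot d y y * x i + (- dot d x y) * y i)) as H.
  rewrite dot_quad in H.
  assert (0 <= dot d y y * (dot d x x * dot d y y - dot d x y ^2)) by nra.
  nra.
Qed.

Definition wv (s : segment) : point := vsub (ep2 s) (ep1 s).
Definition flip (s : segment) : segment := Seg (ep2 s) (ep1 s).

Lemma seg_set_flip : forall s q, seg_set (flip s) q <-> seg_set s q.
Proof.
  intros s q; unfold seg_set, flip; simpl; split; intros [t [Ht Hq]];
  exists (1 - t); split; try lra; intros i; rewrite Hq; ring.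
Qed.

Lemma diam_eq : forall d s, seg_diam d s = sqrt (dot d (wv s) (wv s)).
Proof.
  intros. unfold seg_diam, norm. f_equal.
  rewrite (dot_ext d (vsub (ep1 s) (ep2 s)) (fun i => (-1) * wv s i + 0 * wv s i)
     (vsub (ep1 s) (ep2 s)) (fun i => (-1) * wv s i + 0 * wv s i)).
  - rewrite dot_quad. ring.
  - intros; unfold wv, vsub; ring.
  - intros; unfold wv, vsub; ring.
Qed.

Lemma wv_flip : forall s i, wv (flip s) i = (-1) * wv s i + 0 * wv s i.
Proof. intros; unfold wv, flip, vsub; simpl; ring. Qed.

Lemma dot_flip_l : forall d s z, dot d (wv (flip s)) z = - dot d (wv s) z.
Proof.
  intros. rewrite (dot_ext d _ _ z z (wv_flip s) (fun _ => eq_refl)), dot_lin. ring.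
Qed.

Lemma dot_flip_r : forall d s z, dot d z (wv (flip s)) = - dot d z (wv s).
Proof. intros. rewrite dot_sym, dot_flip_l, dot_sym. reflexivity. Qed.

Lemma diam_flip : forall d s, seg_diam d (flip s) = seg_diam d s.
Proof. intros. rewrite !diam_eq, dot_flip_l, dot_flip_r. f_equal; ring. Qed.

Lemma shadows_transfer : forall d sigma a b a' b',
  (forall q, seg_set a q <-> seg_set a' q) ->
  (forall q, seg_set b q <-> seg_set b' q) ->
  seg_diam d b = seg_diam d b' ->
  shadows d sigma a b -> shadows d sigma a' b'.
Proof.
  intros d sigma a b a' b' Ha Hb Hd H q Hq.
  apply Hb in Hq. destruct (H q Hq) as [p [Hp1 Hp2]].
  exists p. split; [apply Ha; auto | rewrite <- Hd; auto].
Qed.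

Definition xpar d (p : point) s := dot d (vsub p (ep1 s)) (wv s) / dot d (wv s) (wv s).

Lemma xpar_spec : forall d p s, 0 < dot d (wv s) (wv s) -> seg_set s p ->
  (forall i, p i = ep1 s i + xpar d p s * wv s i) /\ 0 <= xpar d p s <= 1.
Proof.
  intros d p s HP [t [Ht Hq]].
  assert (E : xpar d p s = t).
  { unfold xpar.
    rewrite (dot_ext d (vsub p (ep1 s)) (fun i => t * wv s i + 0 * wv s i) (wv s) (wv s)).
    - rewrite dot_lin. field. lra.
    - intros i; unfold wv, vsub. rewrite (Hq i). ring.
    - auto. }
  rewrite E. split; auto.
Qed.

Lemma core : forall d sigma a b (p : point) xa xb,
  0 < sigma ->
  0 < dot d (wv a) (wv a) -> 0 < dot d (wv b) (wv b) ->
  dot d (wv b) (wv b) <= dot d (wv a) (wv a) ->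
  0 <= dot d (wv a) (wv b) ->
  (1 - sigma^2/16) * (dot d (wv a) (wv a) * dot d (wv b) (wv b)) <= (dot d (wv a) (wv b))^2 ->
  (forall i, p i = ep1 a i + xa * wv a i) -> 0 <= xa <= 1 ->
  (forall i, p i = ep1 b i + xb * wv b i) -> 0 <= xb <= 1 ->
  Rabs (xa - xb) <= sigma/2 -> shadows d sigma a b.
Proof.
  intros d sigma a b p xa xb Hs HPa HPb Hab Hc0 Hang Hpa Hxa Hpb Hxb Hx q [t [Ht Hq]].
  pose proof (CS d (wv a) (wv b) HPb) as HCS.
  set (Pa := dot d (wv a) (wv a)) in *.
  set (Pb := dot d (wv b) (wv b)) in *.
  set (c := dot d (wv a) (wv b)) in *.
  set (Da := sqrt Pa). set (Db := sqrt Pb).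
  assert (HDa : Da * Da = Pa) by (apply sqrt_sqrt; lra).
  assert (HDb : Db * Db = Pb) by (apply sqrt_sqrt; lra).
  assert (HDa0 : 0 < Da) by (apply sqrt_lt_R0; lra).
  assert (HDb0 : 0 < Db) by (apply sqrt_lt_R0; lra).
  assert (HDab : Db <= Da) by (apply sqrt_le_1_alt; lra).
  assert (Hc2 : c^2 <= (Da * Db)^2) by (replace ((Da*Db)^2) with (Pa*Pb) by (rewrite <- HDa, <- HDb; ring); lra).
  assert (Hc : c <= Da * Db).
  { destruct (Rle_lt_dec c (Da*Db)); auto. assert (0 < Da*Db) by nra. nra. }
  assert (Hx2 : -(sigma/2) <= xa - xb <= sigma/2) by (revert Hx; unfold Rabs; destruct Rcase_abs; intros; lra). clear Hx.
  set (lam := t - xb).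
  set (mu0 := lam * c / Pa).
  assert (Hmu0 : mu0 * Pa = lam * c) by (unfold mu0; field; lra).
  set (mu := Rmax (-xa) (Rmin (1 - xa) mu0)).
  assert (Hmu : -xa <= mu <= 1 - xa).
  { unfold mu, Rmax, Rmin; repeat destruct Rle_dec; lra. }
  assert (HT : -(sigma * Da * Db / 2) <= mu * Pa - lam * c <= sigma * Da * Db / 2).
  { unfold mu, Rmax, Rmin; destruct (Rle_dec (1 - xa) mu0); destruct Rle_dec.
    -
      assert (H1 : lam * c <= (1 - xb) * c) by (unfold lam; nra).
      assert (H2 : (1 - xb) * Db - (1 - xa) * Da <= sigma * Db / 2) by nra.
      split; nra.
    - lra.
    - split; nra.
    - assert (H1 : - (lam * c) <= xb * c) by (unfold lam; nra).
      assert (H2 : xb * Db - xa * Da <= sigma * Db / 2) by nra.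
      split; nra. }
  exists (fun i => ep1 a i + (xa + mu) * wv a i). split.
  - exists (xa + mu). split; [lra|]. intros; unfold wv, vsub; ring.
  - rewrite diam_eq. fold Pb. fold Db. unfold norm.
    rewrite (dot_ext d (vsub q (fun i => ep1 a i + (xa + mu) * wv a i))
               (fun i => lam * wv b i + (- mu) * wv a i) _
               (fun i => lam * wv b i + (- mu) * wv a i)).
    2,3: intros i; unfold vsub at 1; rewrite Hq;
         change (ep2 b i - ep1 b i) with (wv b i);
         assert (Ea : ep1 a i = ep1 b i + xb * wv b i - xa * wv a i) by (rewrite <- Hpb, Hpa; ring);
         rewrite Ea; unfold lam; ring.
    rewrite dot_quad, (dot_sym d (wv b) (wv a)). fold Pa Pb c.
    rewrite <- (sqrt_square (sigma * Db)) by nra.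
    apply sqrt_le_1_alt.
    assert (Hlam : lam ^ 2 <= 1) by (unfold lam; nra).
    assert (Hid : Pa * (lam ^ 2 * Pb + 2 * lam * - mu * c + (- mu) ^ 2 * Pa)
                  = lam^2 * (Pa * Pb - c^2) + (mu * Pa - lam * c)^2) by ring.
    assert (Hsq : (mu * Pa - lam * c)^2 <= (sigma * Da * Db / 2)^2) by nra.
    assert (Hk : lam^2 * (Pa * Pb - c^2) <= sigma^2/16 * (Pa * Pb)).
    { assert (0 <= Pa * Pb - c^2) by nra. nra. }
    assert (Pa * (lam ^ 2 * Pb + 2 * lam * - mu * c + (- mu) ^ 2 * Pa) <= Pa * (sigma * Db * (sigma * Db))).
    { rewrite Hid. nra. }
    nra.
Qed.

Lemma ge_of_sq : forall x y, 0 <= x -> 0 <= y -> y^2 <= x^2 -> y <= x.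
Proof. intros. destruct (Rle_lt_dec y x); auto. nra. Qed.

Lemma orient : forall d (a b z : point) k,
  0 < dot d a a -> 0 < dot d b b -> 0 < dot d z z -> 1/2 < k ->
  0 <= dot d a z -> 0 <= dot d b z ->
  k^2 * (dot d a a * dot d z z) <= (dot d a z)^2 ->
  k^2 * (dot d b b * dot d z z) <= (dot d b z)^2 ->
  k^2 * (dot d a a * dot d b b) <= (dot d a b)^2 ->
  0 <= dot d a b.
Proof.
  intros d a b z k HPa HPb HPz Hk Haz Hbz H1 H2 H3.
  destruct (Rle_lt_dec 0 (dot d a b)) as [|Hab]; auto. exfalso.
  set (Da := sqrt (dot d a a)). set (Db := sqrt (dot d b b)). set (Dz := sqrt (dot d z z)).
  assert (HDa : Da * Da = dot d a a) by (apply sqrt_sqrt; lra).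
  assert (HDb : Db * Db = dot d b b) by (apply sqrt_sqrt; lra).
  assert (HDz : Dz * Dz = dot d z z) by (apply sqrt_sqrt; lra).
  assert (HDa0 : 0 < Da) by (apply sqrt_lt_R0; lra).
  assert (HDb0 : 0 < Db) by (apply sqrt_lt_R0; lra).
  assert (HDz0 : 0 < Dz) by (apply sqrt_lt_R0; lra).
  assert (Ea : k * Da * Dz <= dot d a z).
  { apply ge_of_sq; auto. repeat apply Rmult_le_pos; lra. rewrite <- HDa, <- HDz in H1. nra. }
  assert (Eb : k * Db * Dz <= dot d b z).
  { apply ge_of_sq; auto. repeat apply Rmult_le_pos; lra. rewrite <- HDb, <- HDz in H2. nra. }
  assert (Eab : k * Da * Db <= - dot d a b).
  { apply ge_of_sq; [lra|repeat apply Rmult_le_pos; lra|]. rewrite <- HDa, <- HDb in H3. nra. }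
  pose proof (CS d (fun i => Db * a i + Da * b i) z HPz) as HC.
  rewrite dot_lin, dot_quad in HC.
  pose proof (Rmult_le_compat_l Db _ _ (Rlt_le _ _ HDb0) Ea).
  pose proof (Rmult_le_compat_l Da _ _ (Rlt_le _ _ HDa0) Eb).
  pose proof (Rmult_le_compat_l (Da*Db) _ _ (Rlt_le _ _ (Rmult_lt_0_compat _ _ HDa0 HDb0)) Eab).
  assert (V1 : 2 * k * (Da * Db * Dz) <= Db * dot d a z + Da * dot d b z) by lra.
  assert (V2 : Db ^ 2 * dot d a a + 2 * Db * Da * dot d a b + Da ^ 2 * dot d b b
               <= 2 * (1 - k) * (Da*Db)^2).
  { rewrite <- HDa, <- HDb. nra. }
  assert (V3 : (2 * k * (Da * Db * Dz))^2 <= (Db * dot d a z + Da * dot d b z)^2).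
  { assert (0 <= 2 * k * (Da * Db * Dz)) by (assert (0 < Da*Db*Dz) by (apply Rmult_lt_0_compat; nra); nra). nra. }
  assert (V4 : (2 * k * (Da * Db * Dz))^2 <= 2 * (1 - k) * (Da*Db)^2 * (Dz*Dz)).
  { rewrite HDz. nra. }
  assert (0 < (Da*Db*Dz)^2) by (assert (0 < Da*Db*Dz) by (apply Rmult_lt_0_compat; nra); nra).
  assert (W : (4 * k^2) * (Da*Db*Dz)^2 <= (2 - 2*k) * (Da*Db*Dz)^2).
  { replace ((4 * k^2) * (Da*Db*Dz)^2) with ((2 * k * (Da * Db * Dz))^2) by ring.
    replace ((2 - 2*k) * (Da*Db*Dz)^2) with (2 * (1 - k) * (Da*Db)^2 * (Dz*Dz)) by ring. exact V4. }
  assert (0 < (2*k - 1) * (k + 1)) by nra.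
  nra.
Qed.

Lemma angle_bound : forall d s s' theta,
  0 < dot d (wv s) (wv s) -> 0 < dot d (wv s') (wv s') ->
  0 < theta < PI / 2 -> seg_angle d s s' <= theta ->
  (cos theta)^2 * (dot d (wv s) (wv s) * dot d (wv s') (wv s')) <= (dot d (wv s) (wv s'))^2.
Proof.
  intros d s s' th HPa HPb Hth Hang.
  unfold seg_angle in Hang. change (vsub (ep2 s) (ep1 s)) with (wv s) in Hang.
  change (vsub (ep2 s') (ep1 s')) with (wv s') in Hang. unfold norm in Hang.
  pose proof (CS d (wv s) (wv s') HPb) as HC.
  set (Pa := dot d (wv s) (wv s)) in *.
  set (Pb := dot d (wv s') (wv s')) in *.
  set (c := dot d (wv s) (wv s')) in *.
  set (Da := sqrt Pa) in *. set (Db := sqrt Pb) in *.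
  assert (HDa : Da * Da = Pa) by (apply sqrt_sqrt; lra).
  assert (HDb : Db * Db = Pb) by (apply sqrt_sqrt; lra).
  assert (HDa0 : 0 < Da) by (apply sqrt_lt_R0; lra).
  assert (HDb0 : 0 < Db) by (apply sqrt_lt_R0; lra).
  assert (HD : 0 < Da * Db) by nra.
  assert (Hca : Rabs c <= Da * Db).
  { apply ge_of_sq; [nra | apply Rabs_pos |].
    replace (Rabs c ^ 2) with (c^2) by (unfold Rabs; destruct Rcase_abs; ring).
    rewrite <- HDa, <- HDb in HC. nra. }
  set (y := Rabs c / (Da * Db)) in *.
  assert (Hy : 0 <= y <= 1).
  { unfold y; split. apply Rmult_le_pos; [apply Rabs_pos | left; apply Rinv_0_lt_compat; lra].
    apply Rmult_le_reg_r with (Da * Db); auto. unfold Rdiv. rewrite Rmult_assoc, Rinv_l; lra. }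
  pose proof (acos_bound y).
  assert (Hcos : cos th <= y).
  { rewrite <- (cos_acos y) by lra. apply cos_decr_1; lra. }
  assert (Hcth : 0 < cos th) by (apply cos_gt_0; lra).
  assert (cos th * (Da * Db) <= Rabs c).
  { replace (Rabs c) with (y * (Da * Db)) by (unfold y; field; lra). nra. }
  replace (c^2) with (Rabs c ^ 2) by (unfold Rabs; destruct Rcase_abs; ring).
  rewrite <- HDa, <- HDb.
  assert (0 <= cos th * (Da * Db)) by nra.
  replace (cos th ^ 2 * (Da * Da * (Db * Db))) with ((cos th * (Da * Db))^2) by ring.
  apply pow_incr; lra.
Qed.

Definition al d (z : point) s := if Rle_dec 0 (dot d (wv s) z) then s else flip s.

Lemma al_set : forall d z s q, seg_set (al d z s) q <-> seg_set s q.
Proof. intros; unfold al; destruct Rle_dec; [tauto | apply seg_set_flip]. Qed.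

Lemma al_diam : forall d z s, seg_diam d (al d z s) = seg_diam d s.
Proof. intros; unfold al; destruct Rle_dec; [auto | apply diam_flip]. Qed.

Lemma al_pos : forall d z s, 0 <= dot d (wv (al d z s)) z.
Proof. intros; unfold al; destruct Rle_dec; auto. rewrite dot_flip_l. lra. Qed.

Lemma al_sq : forall d z s s',
  (dot d (wv (al d z s)) (wv (al d z s')))^2 = (dot d (wv s) (wv s'))^2.
Proof.
  intros; unfold al; do 2 destruct Rle_dec; rewrite ?dot_flip_l, ?dot_flip_r; ring.
Qed.

Lemma al_sqz : forall d z s,
  (dot d (wv (al d z s)) z)^2 = (dot d (wv s) z)^2.
Proof.
  intros; unfold al; destruct Rle_dec; rewrite ?dot_flip_l; ring.
Qed.

Lemma al_P : forall d z s,
  dot d (wv (al d z s)) (wv (al d z s)) = dot d (wv s) (wv s).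
Proof.
  intros; unfold al; destruct Rle_dec; rewrite ?dot_flip_l, ?dot_flip_r; ring.
Qed.

Definition bk sigma x := Z.to_nat (up (x * 2 / sigma)).

Lemma up_ge1 : forall r, 0 <= r -> (1 <= up r)%Z.
Proof.
  intros r Hr. destruct (archimed r) as [H1 H2].
  assert (0 < up r)%Z by (apply lt_0_IZR; lra). lia.
Qed.

Lemma up_mono : forall r r', r <= r' -> (up r <= up r')%Z.
Proof.
  intros r r' H. destruct (archimed r) as [H1 H2]. destruct (archimed r') as [H3 H4].
  assert (up r < up r' + 1)%Z by (apply lt_IZR; rewrite plus_IZR; simpl; lra). lia.
Qed.

Lemma bk_range : forall sigma x, 0 < sigma -> 0 <= x <= 1 ->
  (1 <= bk sigma x /\ bk sigma x <= Z.to_nat (up (2 / sigma)))%nat.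
Proof.
  intros sigma x Hs Hx. unfold bk.
  assert (0 <= x * 2 / sigma) by (unfold Rdiv; apply Rmult_le_pos; [lra | left; apply Rinv_0_lt_compat; lra]).
  assert (x * 2 / sigma <= 2 / sigma).
  { unfold Rdiv. apply Rmult_le_compat_r; [left; apply Rinv_0_lt_compat; lra | lra]. }
  pose proof (up_ge1 _ H). pose proof (up_mono _ _ H0). lia.
Qed.

Lemma bk_eq : forall sigma x x', 0 < sigma -> 0 <= x <= 1 -> 0 <= x' <= 1 ->
  bk sigma x = bk sigma x' -> Rabs (x - x') <= sigma / 2.
Proof.
  intros sigma x x' Hs Hx Hx' E. unfold bk in E.
  assert (0 <= x * 2 / sigma) by (unfold Rdiv; apply Rmult_le_pos; [lra | left; apply Rinv_0_lt_compat; lra]).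
  assert (0 <= x' * 2 / sigma) by (unfold Rdiv; apply Rmult_le_pos; [lra | left; apply Rinv_0_lt_compat; lra]).
  pose proof (up_ge1 _ H) as G1. pose proof (up_ge1 _ H0) as G2.
  assert (U : up (x * 2 / sigma) = up (x' * 2 / sigma)) by lia.
  destruct (archimed (x * 2 / sigma)) as [H1 H2]. destruct (archimed (x' * 2 / sigma)) as [H3 H4].
  rewrite U in H1, H2.
  assert (R : Rabs (x * 2 / sigma - x' * 2 / sigma) <= 1) by (unfold Rabs; destruct Rcase_abs; lra).
  replace (x * 2 / sigma - x' * 2 / sigma) with ((x - x') * (2 / sigma)) in R by (field; lra).
  rewrite Rabs_mult, (Rabs_right (2 / sigma)) in R.
  2: { left. unfold Rdiv. apply Rmult_lt_0_compat; [lra | apply Rinv_0_lt_compat; lra]. }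
  apply Rmult_le_compat_r with (r := sigma / 2) in R; [|lra].
  replace (Rabs (x - x') * (2 / sigma) * (sigma / 2)) with (Rabs (x - x')) in R by (field; lra).
  lra.
Qed.

Lemma N_bound : forall sigma, 0 < sigma -> INR (Z.to_nat (up (2 / sigma))) <= 2 / sigma + 1.
Proof.
  intros sigma Hs.
  assert (0 <= 2 / sigma) by (unfold Rdiv; apply Rmult_le_pos; [lra | left; apply Rinv_0_lt_compat; lra]).
  pose proof (up_ge1 _ H).
  rewrite INR_IZR_INZ, Z2Nat.id by lia.
  destruct (archimed (2 / sigma)). lra.
Qed.

Lemma seg_P : forall d s, (1 <= d)%nat -> in_Rd d (ep1 s) -> in_Rd d (ep2 s) -> ep1 s <> ep2 s ->
  0 < dot d (wv s) (wv s).
Proof.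
  intros d s Hd H1 H2 H3. apply dot_pos; auto.
  - intros i Hi. unfold wv, vsub. rewrite H1, H2 by auto. ring.
  - apply NNPP. intro N. apply H3. apply functional_extensionality. intros i.
    apply NNPP. intro N2. apply N. exists i. unfold wv, vsub. intro. apply N2. lra.
Qed.

Theorem mainTheorem5 :
  exists C : R, forall (d : nat) (sigma theta : R) (L : list segment),
    (1 <= d)%nat ->
    0 < sigma <= 1 ->
    0 < theta < PI / 2 ->
    seg_family d L ->
    exposed d sigma L ->
    (exists p : point, forall s, In s L -> seg_set s p) ->
    (forall s s', In s L -> In s' L -> seg_angle d s s' <= theta) ->
    sin theta <= sigma / 4 ->
    INR (length L) <= C / sigma ^ 2.
Proof.
  exists 3. intros d sigma th L Hd Hs Hth [Hfam Hdist] Hexp [p Hp] Hang Hsin.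
  assert (HS : 0 < sigma ^ 2) by nra.
  apply Rle_trans with (2 / sigma + 1).
  2: { replace (2 / sigma + 1) with ((2 * sigma + sigma^2) / sigma^2) by (field; lra).
       unfold Rdiv. apply Rmult_le_compat_r; [left; apply Rinv_0_lt_compat; lra | nra]. }
  assert (Hs0 : 0 <= 2 / sigma) by (unfold Rdiv; apply Rmult_le_pos; [lra | left; apply Rinv_0_lt_compat; lra]).
  destruct L as [|s0 L0].
  { simpl. lra. }
  set (L := s0 :: L0) in *.
  assert (HP : forall s, In s L -> 0 < dot d (wv s) (wv s)).
  { intros s Hs'. destruct (Hfam s Hs') as [A1 [A2 A3]]. apply seg_P; auto. }
  set (z := wv s0).
  assert (Hs0L : In s0 L) by (left; auto).
  assert (Hsin0 : 0 <= sin th) by (apply sin_ge_0; lra).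
  assert (Hk2 : 1 - sigma^2/16 <= (cos th)^2).
  { pose proof (cos2 th). unfold Rsqr in H. nra. }
  assert (Hk0 : 0 < cos th) by (apply cos_gt_0; lra).
  assert (Hk : 1/2 < cos th) by nra.
  assert (HA : forall s s', In s L -> In s' L ->
     (cos th)^2 * (dot d (wv s) (wv s) * dot d (wv s') (wv s')) <= (dot d (wv s) (wv s'))^2).
  { intros s s' H1 H2. apply angle_bound; auto. }
  set (a := al d z).
  assert (HPa : forall s, In s L -> 0 < dot d (wv (a s)) (wv (a s))).
  { intros s H. unfold a. rewrite al_P. auto. }
  assert (Hx : forall s, In s L -> (forall i, p i = ep1 (a s) i + xpar d p (a s) * wv (a s) i)
                                   /\ 0 <= xpar d p (a s) <= 1).
  { intros s H. apply xpar_spec; auto. apply al_set. auto. }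
  assert (Hor : forall s s', In s L -> In s' L -> 0 <= dot d (wv (a s)) (wv (a s'))).
  { intros s s' H1 H2. apply orient with z (cos th); auto.
    - apply HP; auto.
    - apply al_pos.
    - apply al_pos.
    - unfold a. rewrite al_sqz, al_P. apply HA; auto.
    - unfold a. rewrite al_sqz, al_P. apply HA; auto.
    - unfold a. rewrite al_sq, !al_P. apply HA; auto. }
  assert (Hcore : forall s s', In s L -> In s' L ->
      dot d (wv s') (wv s') <= dot d (wv s) (wv s) ->
      Rabs (xpar d p (a s) - xpar d p (a s')) <= sigma / 2 -> shadows d sigma s s').
  { intros s s' H1 H2 Hle Habs.
    apply shadows_transfer with (a s) (a s').
    - intros q; apply al_set.
    - intros q; apply al_set.
    - apply al_diam.
    - destruct (Hx s H1) as [E1 B1]. destruct (Hx s' H2) as [E2 B2].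
      apply core with p (xpar d p (a s)) (xpar d p (a s')); auto; try lra.
      + unfold a; rewrite !al_P; auto.
      + unfold a. rewrite al_sq, !al_P. pose proof (HA s s' H1 H2).
        assert (0 <= dot d (wv s) (wv s) * dot d (wv s') (wv s')).
        { pose proof (HP s H1). pose proof (HP s' H2). nra. }
        nra. }
  set (f := fun s => bk sigma (xpar d p (a s))).
  set (N := Z.to_nat (up (2 / sigma))).
  assert (HND : NoDup (map f L)).
  { apply (NoDup_nth (map f L) (f s0)). rewrite length_map. intros i j Hi Hj E.
    rewrite !map_nth in E.
    destruct (Nat.eq_dec i j) as [|Hij]; auto. exfalso.
    set (dflt := Seg (fun _ => 0) (fun _ => 0)) in *.
    pose proof (Hdist i j Hi Hj Hij) as Hns.
    rewrite (nth_indep L dflt s0 Hi), (nth_indep L dflt s0 Hj) in Hns.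
    set (s := nth i L s0) in *. set (s' := nth j L s0) in *.
    assert (I1 : In s L) by (apply nth_In; auto).
    assert (I2 : In s' L) by (apply nth_In; auto).
    destruct (Hx s I1) as [_ B1]. destruct (Hx s' I2) as [_ B2].
    pose proof (bk_eq sigma _ _ (proj1 Hs) B1 B2 E) as Habs.
    destruct (Rle_lt_dec (dot d (wv s') (wv s')) (dot d (wv s) (wv s))) as [Hle|Hlt].
    - apply (Hexp s s' I1 I2 Hns). apply Hcore; auto.
    - apply (Hexp s' s I2 I1).
      + intro Hsm. apply Hns. intro q. symmetry. apply Hsm.
      + apply Hcore; auto. lra. rewrite Rabs_minus_sym; auto. }
  assert (Hincl : incl (map f L) (seq 1 N)).
  { intros y Hy. apply in_map_iff in Hy. destruct Hy as [s [Hy Hs']]. subst y.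
    destruct (Hx s Hs') as [_ B]. pose proof (bk_range sigma _ (proj1 Hs) B).
    apply in_seq. unfold f, N. lia. }
  pose proof (NoDup_incl_length HND Hincl) as Hlen.
  rewrite length_map, length_seq in Hlen.
  apply le_INR in Hlen. pose proof (N_bound sigma (proj1 Hs)). fold N in H. lra.
Qed.
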